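(* Let $G=(V,E,H)$ be a HEDG and $U_1,U_2\subseteq V$ disjoint subsets. Then $(G^{\mathrm{marg}\setminus U_1})^{\mathrm{marg}\setminus U_2}=G^{\mathrm{marg}\setminus(U_1\cup U_2)}=(G^{\mathrm{marg}\setminus U_2})^{\mathrm{marg}\setminus U_1}$.
   Context: A HEDG is $G=(V,E,H)$ with $V$ finite, $E\subseteq V\times V$ directed edges (self-loops allowed), $H$ a simplicial complex on $V$ (a set of subsets of $V$ containing all singletons and closed under taking subsets). Marginalization of $G$ with respect to $U\subseteq V$: $G^{\mathrm{marg}\setminus U}=(V\setminus U,E',H')$ where $v_1\to v_2\in E'$ iff $G$ has a directed path $v_1\to u_1\to\cdots\to u_r\to v_2$ with $r\ge0$ and all $u_i\in U$; and $F'\subseteq V\setminus U$ belongs to $H'$ iff there exists $F\in H$ with $F\subseteq F'\cup U$ such that every $v\in F'$ either lies in $F\setminus U$ or there is a directed path $u_1\to\cdots\to u_r\to v$ in $G$ with $r\ge1$, all $u_i\in U$ and $u_1\in F\cap U$. *)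

(* Defs.v *)
From mathcomp Require Import all_boot.
Set Implicit Arguments. Unset Strict Implicit. Unset Printing Implicit Defensive.

(* A HEDG over an ambient finite type T: vertex set V, directed edges E
   (a relation, self-loops allowed), hyperedges H (a family of subsets). *)
Record hedg (T : finType) := Hedg {
  hV : {set T};
  hE : T -> T -> Prop;
  hH : {set T} -> Prop }.

Definition is_hedg (T : finType) (G : hedg T) : Prop :=
  (forall x y, hE G x y -> x \in hV G /\ y \in hV G) /\
  (forall F, hH G F -> F \subset hV G) /\
  (forall v, v \in hV G -> hH G [set v]) /\
  (forall F F' : {set T}, hH G F -> F' \subset F -> hH G F').

Fixpoint epath (T : finType) (G : hedg T) (x : T) (p : seq T) (y : T) : Prop :=
  match p with
  | [::] => hE G x y
  | z :: p' => hE G x z /\ epath G z p' y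
  end.

Definition marg (T : finType) (G : hedg T) (U : {set T}) : hedg T :=
  Hedg (hV G :\: U)
    (fun v1 v2 => v1 \in hV G :\: U /\ v2 \in hV G :\: U /\
       exists p : seq T, all (fun u => u \in U) p /\ epath G v1 p v2)
    (fun F' : {set T} => F' \subset hV G :\: U /\
       exists F : {set T}, hH G F /\ F \subset F' :|: U /\
         forall v, v \in F' ->
           v \in F :\: U \/
           exists u1, u1 \in F :&: U /\
             exists p : seq T, all (fun u => u \in U) p /\ epath G u1 p v).

Definition hedg_eq (T : finType) (G1 G2 : hedg T) : Prop :=
  hV G1 = hV G2 /\
  (forall x y, hE G1 x y <-> hE G2 x y) /\
  (forall F, hH G1 F <-> hH G2 F).

(* Main.v *)
From Stdlib Require Import ClassicalEpsilon.
Require Import Defs.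
From mathcomp Require Import all_boot.
Set Implicit Arguments. Unset Strict Implicit.

Section S.
Variables (T : finType) (G : hedg T).

Lemma epath_cat x p z q y :
  epath G x (p ++ z :: q) y <-> epath G x p z /\ epath G z q y.
Proof.
elim: p x => [|a p IH] x /=; first by [].
rewrite IH; tauto.
Qed.

Lemma epath_mem x p y : is_hedg G -> epath G x p y -> x \in hV G /\ y \in hV G.
Proof.
move=> [HE _].
elim: p x => [|a p IH] x /=; first by move/HE.
by move=> [/HE [-> _] /IH [_ ->]].
Qed.

Variables (U1 U2 : {set T}).
Hypothesis hG : is_hedg G.
Hypothesis dis : [disjoint U1 & U2].
Hypothesis sU2 : U2 \subset hV G.

Lemma marg_path_G x p y : all (fun u => u \in U2) p -> epath (marg G U1) x p y ->
  exists q, all (fun u => u \in U1 :|: U2) q /\ epath G x q y.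
Proof.
elim: p x => [|z p IH] x /=.
  move=> _ [_ [_ [q [Hq Hp]]]]; exists q; split => //.
  by move: Hq; apply: sub_all => u; rewrite inE => ->.
move=> /andP [Hz Hp] [[_ [_ [q1 [Hq1 Hp1]]]] Hpath].
have [q2 [Hq2 Hp2]] := IH z Hp Hpath.
exists (q1 ++ z :: q2); split; last by apply/epath_cat.
rewrite all_cat /= Hq2 inE Hz orbT !andbT.
by move: Hq1; apply: sub_all => u; rewrite inE => ->.
Qed.

Lemma G_path_marg y q : forall x r, all (fun u => u \in U1) r ->
  all (fun u => u \in U1 :|: U2) q -> x \in hV G :\: U1 -> y \in hV G :\: U1 ->
  epath G x (r ++ q) y ->
  exists p, all (fun u => u \in U2) p /\ epath (marg G U1) x p y.
Proof.
elim: q => [|z q IH] x r Hr Hq Hx Hy.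
  rewrite cats0 => Hp; exists [::]; split => //=; split => //; split => //.
  by exists r.
move: Hq => /= /andP [Hz Hq].
rewrite inE in Hz; case/orP: Hz => Hz.
  rewrite -cat_rcons => Hp; apply: (IH x (rcons r z)) => //.
  by rewrite -cats1 all_cat Hr /= Hz.
move/epath_cat => [Hp1 Hp2].
have Hzv : z \in hV G :\: U1.
  have zU1 : (z \in U1) = false by rewrite (disjointFr (A:=U2) (B:=U1)) // disjoint_sym.
  by rewrite inE zU1; case: (epath_mem hG Hp1) => _ ->.
have [p [Hp Hpp]] := IH z [::] erefl Hq Hzv Hy Hp2.
exists (z :: p); split; first by rewrite /= Hz.
by split => //; split => //; split => //; exists r.
Qed.


Lemma first_U2 u v q : forall r, all (fun u => u \in U1) r ->
  all (fun u => u \in U1 :|: U2) q -> v \in hV G :\: U1 ->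
  epath G u (r ++ q) v ->
  (exists r' u1, all (fun u => u \in U1) r' /\ u1 \in U2 /\ epath G u r' u1 /\
     exists p, all (fun u => u \in U2) p /\ epath (marg G U1) u1 p v)
  \/ all (fun u => u \in U1) (r ++ q).
Proof.
elim: q => [|z q IH] r Hr Hq Hv.
  by rewrite cats0 => _; right.
move: Hq => /= /andP [Hz Hq].
rewrite inE in Hz; case/orP: Hz => Hz.
  rewrite -cat_rcons => Hp; apply: (IH (rcons r z)) => //.
  by rewrite -cats1 all_cat Hr /= Hz.
move/epath_cat => [Hp1 Hp2]; left; exists r, z; do 3 split => //.
have Hzv : z \in hV G :\: U1.
  have zU1 : (z \in U1) = false by rewrite (disjointFr (A:=U2) (B:=U1)) // disjoint_sym.
  by rewrite inE zU1; case: (epath_mem hG Hp1) => _ ->.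
exact: (G_path_marg (r:=[::]) erefl Hq Hzv Hv Hp2).
Qed.

End S.

Definition pb (P : Prop) : bool := if excluded_middle_informative P then true else false.
Lemma pbP (P : Prop) : pb P <-> P.
Proof. by rewrite /pb; case: excluded_middle_informative. Qed.

Lemma marg_comp (T : finType) (G : hedg T) (U1 U2 : {set T}) :
  is_hedg G -> U2 \subset hV G -> [disjoint U1 & U2] ->
  hedg_eq (marg (marg G U1) U2) (marg G (U1 :|: U2)).
Proof.
move=> hG sU2 dis.
have dU2 x : x \in U2 -> (x \in U1) = false.
  by move=> H; rewrite (disjointFr (A:=U2) (B:=U1)) // disjoint_sym.
split; first by rewrite /= setDDl.
split.
  move=> x y /=; split.
    move=> [x1 [x2 [p [Hp Hpath]]]].
    rewrite setDDl in x1 x2; do 2 split => //.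
    exact: (marg_path_G Hp Hpath).
  move=> [x1 [x2 [q [Hq Hpath]]]]; rewrite -setDDl in x1 x2.
  split => //; split => //.
  apply: (G_path_marg (r:=[::]) hG dis erefl Hq _ _ Hpath).
    by move: x1; rewrite inE => /andP [].
  by move: x2; rewrite inE => /andP [].
move=> F' /=; split.
  move=> [HF' [F1 [[HF1sub [F [HF [HFsub HFc]]]] [HF1sub' HF1c]]]].
  rewrite setDDl in HF'; split => //; exists F; split => //; split.
    apply/subsetP => x /(subsetP HFsub); rewrite !inE; case/orP => [/(subsetP HF1sub')|->]; last by rewrite !orbT.
    by rewrite !inE; case/orP => ->; rewrite ?orbT.
  move=> v Hv; case: (HF1c v Hv).
    rewrite inE => /andP [vU2 vF1]; case: (HFc v vF1).
      by move=> H; left; move: H; rewrite !inE (negbTE vU2) orbF.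
    move=> [u [Hu [p [Hp Hpath]]]]; right; exists u; split.
      by move: Hu; rewrite !inE => /andP [-> ->].
    by exists p; split => //; move: Hp; apply: sub_all => w; rewrite inE => ->.
  move=> [u1 [Hu1 [p [Hp Hpath]]]].
  have [q [Hq Hpq]] := marg_path_G Hp Hpath.
  move: Hu1; rewrite inE => /andP [u1F1 u1U2].
  right; case: (HFc u1 u1F1).
    rewrite inE => /andP [_ u1F]; exists u1; split; first by rewrite !inE u1F u1U2 orbT.
    by exists q.
  move=> [u [Hu [r [Hr Hpath']]]]; exists u; split.
    by move: Hu; rewrite !inE => /andP [-> ->].
  exists (r ++ u1 :: q); split; last by apply/epath_cat.
  rewrite all_cat /= Hq inE u1U2 orbT !andbT.
  by move: Hr; apply: sub_all => w; rewrite inE => ->.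
move=> [HF' [F [HF [HFsub HFc]]]].
set F1 := [set w in F' :|: U2 | (w \in F :\: U1) ||
   pb (exists u, u \in F :&: U1 /\ exists p, all (fun u => u \in U1) p /\ epath G u p w)].
have HF'2 : F' \subset hV G :\: U1 :\: U2 by rewrite setDDl.
have HF'v v : v \in F' -> [/\ v \in hV G, v \notin U1 & v \notin U2].
  by move/(subsetP HF'2); rewrite !inE => /andP [-> /andP [-> ->]].
split => //.
exists F1; split; first split.
- apply/subsetP => w; rewrite inE => /andP []; rewrite inE => /orP [/HF'v [a b _] _|wU2 _].
    by rewrite inE a b.
  by rewrite inE dU2 // (subsetP sU2).
- exists F; split => //; split.
    apply/subsetP => x xF; rewrite inE; case xU1: (x \in U1); first by rewrite orbT.
    have := subsetP HFsub x xF; rewrite !inE xU1 /= => xF'U2.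
    by rewrite xF'U2 xF.
  move=> w; rewrite inE => /andP [_ /orP [wF|/pbP]]; first by left.
  by right.
- split.
    by apply/subsetP => w; rewrite inE => /andP [].
  move=> v Hv; have [vV vU1 vU2] := HF'v v Hv.
  case: (HFc v Hv).
    rewrite !inE negb_or => /andP [/andP [nU1 nU2] vF]; left.
    by rewrite !inE nU2 Hv nU1 vF || rewrite nU2 Hv nU1 vF.
  move=> [u [Hu [q [Hq Hpath]]]].
  move: Hu; rewrite !inE => /andP [uF /orP [uU1|uU2]].
    have Hvv : v \in hV G :\: U1 by rewrite inE vU1.
    case: (first_U2 hG dis (r:=[::]) erefl Hq Hvv Hpath).
      move=> [r' [u1 [Hr' [u1U2 [Hp1 [p [Hp Hp2]]]]]]]; right; exists u1; split; last by exists p.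
      rewrite !inE u1U2 andbT orbT /=; apply/orP; right; apply/pbP.
      by exists u; split; [apply/setIP | exists r'].
    move=> Hq1; left; rewrite ?inE vU2 Hv /=; apply/orP; right; apply/pbP.
    by exists u; split; [apply/setIP | exists q].
  right; exists u; split.
    by rewrite !inE uU2 andbT orbT /= dU2 // uF.
  have Hu : u \in hV G :\: U1 by rewrite inE dU2 // (subsetP sU2).
  have Hvv : v \in hV G :\: U1 by rewrite inE vU1.
  exact: (G_path_marg (r:=[::]) hG dis erefl Hq Hu Hvv Hpath).
Qed.

Theorem mainTheorem17 (T : finType) (G : hedg T) (U1 U2 : {set T}) :
  is_hedg G -> U1 \subset hV G -> U2 \subset hV G -> [disjoint U1 & U2] ->
  hedg_eq (marg (marg G U1) U2) (marg G (U1 :|: U2)) /\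
  hedg_eq (marg G (U1 :|: U2)) (marg (marg G U2) U1).
Proof.
move=> hG s1 s2 dis; split; first exact: marg_comp.
have := @marg_comp T G U2 U1 hG s1; rewrite disjoint_sym setUC => /(_ dis).
move=> [h1 [h2 h3]]; split; first by rewrite h1.
split => x; [move=> y|]; [rewrite h2 | rewrite h3]; tauto.
Qed.
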